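(* There exists an ultragraph $\mathcal G'$ (with no sinks) whose ultragraph shift space $X'$ is countable and contains a DC1 pair (for a suitable enumeration of the ultrapaths defining the metric); in particular $X'$ has a DC1 pair but no uncountable DC1 set (and is not Li–Yorke chaotic). Concretely, $\mathcal G'$ can be taken with vertices $\{v_n\}_{n\ge0}$, edges $\{e_n\}_{n\ge0}$, $s(e_n)=v_n$ for all $n\ge0$, $r(e_n)=\{v_{n+1}\}$ for $n\ge1$, and $r(e_0)=A$ where $A=\bigcup_{i\ge1}V_i$, $V_1=\{v_1,\dots,v_{k_1}\}$, $V_n=\{v_{t_n+1},\dots,v_{t_n+k_n}\}$ with $t_n=\sum_{i=1}^{n-1}(k_i+\ell_i)$ for $n>1$, for suitably chosen sequences of positive integers $(k_n)$, $(\ell_n)$; the DC1 pair is $(e_1e_2e_3\dots,\ A)$.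
   Context: An ultragraph $\mathcal G=(G^0,\mathcal G^1,r,s)$ consists of countable sets $G^0$ (vertices) and $\mathcal G^1$ (edges), a map $s:\mathcal G^1\to G^0$ and a map $r:\mathcal G^1\to P(G^0)\setminus\{\emptyset\}$. Standing assumption: $\mathcal G$ has no sinks, i.e. $s^{-1}(v)\neq\emptyset$ for every $v\in G^0$. $\mathcal G^0$ is the smallest subset of $P(G^0)$ containing $\{v\}$ for all $v\in G^0$ and $r(e)$ for all $e\in\mathcal G^1$, and closed under finite unions and nonempty finite intersections. A finite path is either an element of $\mathcal G^0$ (length $0$) or a sequence of edges $e_1\dots e_k$ with $s(e_{i+1})\in r(e_i)$ (length $k$); an infinite path is a sequence $e_1e_2\dots$ of edges with $s(e_{i+1})\in r(e_i)$ for all $i$, and $\mathfrak p^\infty$ is the set of infinite paths. The set of ultrapaths $\mathfrak p$ consists of all $A\in\mathcal G^0$ (length $0$) and all pairs $(\alpha,A)$ with $\alpha=e_1\dots e_k$ a finite path, $k\ge1$, $A\in\mathcal G^0$, $A\subseteq r(e_k)$ (length $k$). A set $A\in\mathcal G^0$ is an infinite emitter if $\{e\in\mathcal G^1:s(e)\in A\}$ is infinite, and a minimal infinite emitter if moreover no proper subset of $A$ belonging to $\mathcal G^0$ is an infinite emitter. The ultragraph shift space is $X=\mathfrak p^\infty\cup X_{fin}$, where $X_{fin}$ consists of all $(\alpha,A)\in\mathfrak p$ with $|\alpha|\ge1$ and $A$ a minimal infinite emitter contained in $r(\alpha)$, together with all minimal infinite emitters $A\in\mathcal G^0$. An ultrapath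 $p$ is an initial segment of $x\in X$ when: if $p=A\in\mathcal G^0$, then either $x$ has length $\ge1$ and its first edge has source in $A$, or $x=B\in\mathcal G^0$ with $B\subseteq A$; if $p=(\alpha,A)$ with $|\alpha|\ge1$, then the first $|\alpha|$ edges of $x$ form $\alpha$ and either $x$ has length $>|\alpha|$ and its $(|\alpha|+1)$-th edge has source in $A$, or $x=(\alpha,B)$ with $B\subseteq A$. Fix an enumeration $\mathfrak p=\{p_1,p_2,\dots\}$; the metric on $X$ is $d(x,x)=0$ and, for $x\neq y$, $d(x,y)=2^{-i}$ where $i$ is the least index such that $p_i$ is an initial segment of exactly one of $x,y$. The shift map $\sigma:X\to X$ is $\sigma(\gamma_1\gamma_2\dots)=\gamma_2\gamma_3\dots$, $\sigma((\gamma_1\dots\gamma_n,A))=(\gamma_2\dots\gamma_n,A)$ if $n>1$, $\sigma((\gamma_1,A))=A$, $\sigma(A)=A$. For $\delta>0$, $n\ge1$, $\Phi(n,\delta,x,y)=\frac{\#\{0\le k\le n: d(\sigma^k(x),\sigma^k(y))<\delta\}}{n}$. A pair $(x,y)$ is a DC1 pair if $\limsup_n\Phi(n,\delta,x,y)=1$ for all $\delta>0$ and $\liminf_n\Phi(n,\delta_0,x,y)=0$ for some $\delta_0>0$; a DC1 set is a set in which every pair of distinct points is a DC1 pair. A scrambled (Li–Yorke) pair satisfies $\liminf_n d(\sigma^n x,\sigma^n y)=0<\limsup_n d(\sigma^n x,\sigma^n y)$, and $X$ is Li–Yorke chaotic if it has an uncountable set all of whose distinct pairs are scrambled. *)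

(* Defs.v *)
From Stdlib Require Import Reals List Arith ClassicalEpsilon.
Open Scope R_scope.

Definition subset {V : Type} (A B : V -> Prop) : Prop := forall v, A v -> B v.

(* Inductive generation of the lattice 𝒢^0 (singletons, ranges, closed under
   binary unions and binary intersections; binary closure = finite closure for
   nonempty finite families). *)
Inductive G0i {V E : Type} (r : E -> V -> Prop) : (V -> Prop) -> Prop :=
| G0i_sing : forall v : V, G0i r (fun w => w = v)
| G0i_rng : forall e : E, G0i r (r e)
| G0i_union : forall A B, G0i r A -> G0i r B -> G0i r (fun x => A x \/ B x)
| G0i_inter : forall A B, G0i r A -> G0i r B -> G0i r (fun x => A x /\ B x).

Definition inG0 {V E : Type} (r : E -> V -> Prop) (A : V -> Prop) : Prop :=
  exists B, G0i r B /\ forall x, A x <-> B x.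

(* Ultragraph axioms for (s, r): ranges nonempty, no sinks.
   (Countability of vertices/edges is ensured by taking V = E = nat below.) *)
Definition ranges_nonempty {V E : Type} (r : E -> V -> Prop) : Prop :=
  forall e, exists v, r e v.
Definition no_sinks {V E : Type} (s : E -> V) : Prop :=
  forall v, exists e, s e = v.

(* points: infinite sequences of edges, or pairs (alpha, A) (alpha = [] encodes A) *)
Inductive pt (V E : Type) : Type :=
| Inf : (nat -> E) -> pt V E
| Fin : list E -> (V -> Prop) -> pt V E.
Arguments Inf {V E} _.
Arguments Fin {V E} _ _.

Definition is_path {V E : Type} (s : E -> V) (r : E -> V -> Prop) (a : list E) : Prop :=
  forall i e f, nth_error a i = Some e -> nth_error a (S i) = Some f -> r e (s f).

(* A ⊆ r(last edge of a) when a is nonempty; vacuous for a = [] *)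
Definition ends_in {V E : Type} (r : E -> V -> Prop) (a : list E) (A : V -> Prop) : Prop :=
  forall e, nth_error a (pred (length a)) = Some e -> subset A (r e).

Definition is_upath {V E : Type} (s : E -> V) (r : E -> V -> Prop)
  (q : list E * (V -> Prop)) : Prop :=
  inG0 r (snd q) /\ is_path s r (fst q) /\ ends_in r (fst q) (snd q).

Definition infinite_emitter {V E : Type} (s : E -> V) (r : E -> V -> Prop)
  (A : V -> Prop) : Prop :=
  inG0 r A /\ forall l : list E, exists e, A (s e) /\ ~ In e l.

Definition minimal_infinite_emitter {V E : Type} (s : E -> V) (r : E -> V -> Prop)
  (A : V -> Prop) : Prop :=
  infinite_emitter s r A /\
  forall B, inG0 r B -> subset B A -> (exists v, A v /\ ~ B v) ->
    ~ infinite_emitter s r B.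

Definition in_X {V E : Type} (s : E -> V) (r : E -> V -> Prop) (x : pt V E) : Prop :=
  match x with
  | Inf g => forall k, r (g k) (s (g (S k)))
  | Fin a A => is_path s r a /\ minimal_infinite_emitter s r A /\ ends_in r a A
  end.

Definition edge_at {V E : Type} (x : pt V E) (k : nat) : option E :=
  match x with
  | Inf g => Some (g k)
  | Fin a _ => nth_error a k
  end.

Definition is_init {V E : Type} (s : E -> V) (q : list E * (V -> Prop)) (x : pt V E) : Prop :=
  (forall j e, nth_error (fst q) j = Some e -> edge_at x j = Some e) /\
  ((exists e, edge_at x (length (fst q)) = Some e /\ snd q (s e)) \/
   (exists B, x = Fin (fst q) B /\ subset B (snd q))).

(* enumeration p_1, p_2, ... of the ultrapaths (here p (i-1) is p_i) *)
Definition enumeration {V E : Type} (s : E -> V) (r : E -> V -> Prop)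
  (p : nat -> list E * (V -> Prop)) : Prop :=
  (forall i, is_upath s r (p i)) /\
  (forall q, is_upath s r q -> exists! i, p i = q).

Definition separates {V E : Type} (s : E -> V) (p : nat -> list E * (V -> Prop))
  (x y : pt V E) (i : nat) : Prop :=
  (is_init s (p i) x /\ ~ is_init s (p i) y) \/ (~ is_init s (p i) x /\ is_init s (p i) y).

(* d(x,y) = 2^{-(i+1)} for the least 0-based index i (i.e. p_{i+1}) separating x,y *)
Definition dist {V E : Type} (s : E -> V) (p : nat -> list E * (V -> Prop))
  (x y : pt V E) : R :=
  epsilon (inhabits 0) (fun d =>
    (x = y /\ d = 0) \/
    (x <> y /\ exists i, separates s p x y i /\
        (forall j, (j < i)%nat -> ~ separates s p x y j) /\ d = (/2) ^ (S i))).

Definition shift {V E : Type} (x : pt V E) : pt V E :=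
  match x with
  | Inf g => Inf (fun k => g (S k))
  | Fin (_ :: a) A => Fin a A
  | Fin nil A => Fin nil A
  end.

Definition shiftn {V E : Type} (k : nat) (x : pt V E) : pt V E := Nat.iter k shift x.

Definition ind (P : Prop) : R := if excluded_middle_informative P then 1 else 0.

Definition Phi {V E : Type} (s : E -> V) (p : nat -> list E * (V -> Prop))
  (n : nat) (delta : R) (x y : pt V E) : R :=
  sum_f_R0 (fun k => ind (dist s p (shiftn k x) (shiftn k y) < delta)) n / INR n.

Definition limsup_eq (u : nat -> R) (L : R) : Prop :=
  forall eps, 0 < eps ->
    (exists N, forall n, (N <= n)%nat -> u n < L + eps) /\
    (forall N, exists n, (N <= n)%nat /\ L - eps < u n).
Definition liminf_eq (u : nat -> R) (L : R) : Prop :=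
  forall eps, 0 < eps ->
    (exists N, forall n, (N <= n)%nat -> L - eps < u n) /\
    (forall N, exists n, (N <= n)%nat /\ u n < L + eps).

(* Φ is indexed by n >= 1, hence the shift n ↦ S n *)
Definition DC1_pair {V E : Type} (s : E -> V) (p : nat -> list E * (V -> Prop))
  (x y : pt V E) : Prop :=
  (forall delta, 0 < delta -> limsup_eq (fun n => Phi s p (S n) delta x y) 1) /\
  (exists delta0, 0 < delta0 /\ liminf_eq (fun n => Phi s p (S n) delta0 x y) 0).

Definition DC1_set {V E : Type} (s : E -> V) (p : nat -> list E * (V -> Prop))
  (S : pt V E -> Prop) : Prop :=
  forall x y, S x -> S y -> x <> y -> DC1_pair s p x y.

Definition scrambled_pair {V E : Type} (s : E -> V) (p : nat -> list E * (V -> Prop))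
  (x y : pt V E) : Prop :=
  liminf_eq (fun n => dist s p (shiftn n x) (shiftn n y)) 0 /\
  exists L, limsup_eq (fun n => dist s p (shiftn n x) (shiftn n y)) L /\ 0 < L.

Definition countable_set {T : Type} (S : T -> Prop) : Prop :=
  exists f : nat -> T, forall x, S x -> exists n, f n = x.

Definition Li_Yorke_chaotic {V E : Type} (s : E -> V) (r : E -> V -> Prop)
  (p : nat -> list E * (V -> Prop)) : Prop :=
  exists S : pt V E -> Prop, subset S (in_X s r) /\ ~ countable_set S /\
    forall x y, S x -> S y -> x <> y -> scrambled_pair s p x y.

(* The concrete ultragraph 𝒢': vertices v_n = n, edges e_n = n, s(e_n) = v_n,
   r(e_n) = {v_{n+1}} for n >= 1, r(e_0) = A = ⋃_{n>=1} V_n,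
   V_n = {v_{t_n+1}, ..., v_{t_n+k_n}}, t_n = Σ_{i=1}^{n-1} (k_i + l_i). *)
Fixpoint tsum (k l : nat -> nat) (n : nat) : nat :=
  match n with
  | O => O
  | S m => (tsum k l m + (k (S m) + l (S m)))%nat
  end.

Definition t_ (k l : nat -> nat) (n : nat) : nat := tsum k l (pred n).

Definition Aset (k l : nat -> nat) : nat -> Prop :=
  fun v => exists n, (1 <= n)%nat /\ (t_ k l n < v <= t_ k l n + k n)%nat.

Definition srcG (e : nat) : nat := e.

Definition rngG (k l : nat -> nat) (e : nat) : nat -> Prop :=
  match e with
  | O => Aset k l
  | S _ => fun v => v = S e
  end.

(* Main.v *)
Require Import Defs.
From Stdlib Require Import Reals List Arith Lia Lra Classical FunctionalExtensionality PropExtensionality Cantor ClassicalEpsilon.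
Open Scope R_scope.
Arguments to_nat : simpl never.

Fixpoint Tn (m : nat) : nat := match m with O => O | S m' => (S m' * (Tn m' + 1))%nat end.

Lemma Tn_S m : (Tn m < Tn (S m))%nat.
Proof. simpl. nia. Qed.

Lemma Tn_mono i j : (i <= j)%nat -> (Tn i <= Tn j)%nat.
Proof. induction 1. lia. pose proof (Tn_S m). lia. Qed.

Lemma Tn_strict i j : (i < j)%nat -> (Tn i < Tn j)%nat.
Proof. intro H. pose proof (Tn_S i). pose proof (Tn_mono (S i) j H). lia. Qed.

Lemma Tn_ge m : (m <= Tn m)%nat.
Proof. induction m. simpl; lia. pose proof (Tn_S m). lia. Qed.

Definition kk (n : nat) : nat := match n with O => 1%nat | S m => (Tn (S (2*m)) - Tn (2*m))%nat end.
Definition ll (n : nat) : nat := match n with O => 1%nat | S m => (Tn (S (S (2*m))) - Tn (S (2*m)))%nat end.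

Lemma tsum_eq m : tsum kk ll m = Tn (2*m).
Proof.
  induction m. reflexivity.
  cbn [tsum]. rewrite IHm. unfold kk, ll.
  replace (2 * S m)%nat with (S (S (2*m))) by lia.
  pose proof (Tn_S (2*m)). pose proof (Tn_S (S (2*m))). set (a := Tn (2*m)) in *. set (b := Tn (S (2*m))) in *. set (c := Tn (S (S (2*m)))) in *. lia.
Qed.

Lemma Aset_iff v : Aset kk ll v <-> exists j, (Tn (2*j) < v <= Tn (S (2*j)))%nat.
Proof.
  unfold Aset, t_. split.
  - intros [n [H1 H2]]. destruct n as [|j]. lia. exists j.
    simpl pred in H2. rewrite tsum_eq in H2. unfold kk in H2.
    pose proof (Tn_S (2*j)). lia.
  - intros [j H]. exists (S j). split. lia. simpl pred. rewrite tsum_eq. unfold kk.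
    pose proof (Tn_S (2*j)). lia.
Qed.

Lemma Aset_gap j v : (Tn (S (2*j)) < v <= Tn (S (S (2*j))))%nat -> ~ Aset kk ll v.
Proof.
  intros H HA. apply Aset_iff in HA. destruct HA as [i Hi].
  destruct (le_lt_dec i j).
  - pose proof (Tn_mono (S (2*i)) (S (2*j))). lia.
  - pose proof (Tn_mono (S (S (2*j))) (2*i)). lia.
Qed.

Lemma Aset_0 : ~ Aset kk ll 0.
Proof. intro H. apply Aset_iff in H. destruct H. lia. Qed.

Lemma Aset_unb N : exists v, (N <= v)%nat /\ Aset kk ll v.
Proof.
  exists (Tn (S (2*N))). split. pose proof (Tn_ge (S (2*N))). lia.
  apply Aset_iff. exists N. pose proof (Tn_S (2*N)). lia.
Qed.

Lemma rng_0 e : ~ rngG kk ll e 0.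
Proof. destruct e; simpl. apply Aset_0. lia. Qed.

Lemma G0_inv B : G0i (rngG kk ll) B ->
  (exists M, forall x, B x -> (x < M)%nat) \/ (forall x, Aset kk ll x -> B x).
Proof.
  induction 1.
  - left. exists (S v). intros x ->. lia.
  - destruct e as [|m]. right. simpl. auto.
    left. exists (S (S (S m))). simpl. intros x ->. lia.
  - destruct IHG0i1 as [[M1 H1]|H1]; [destruct IHG0i2 as [[M2 H2]|H2]|].
    + left. exists (M1 + M2)%nat. intros x [h|h]; [apply H1 in h|apply H2 in h]; lia.
    + right. auto.
    + right. auto.
  - destruct IHG0i1 as [[M1 H1]|H1].
    + left. exists M1. intros x [h _]. auto.
    + destruct IHG0i2 as [[M2 H2]|H2].
      * left. exists M2. intros x [_ h]. auto.
      * right. auto.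
Qed.

Lemma inG0_inv B : inG0 (rngG kk ll) B ->
  (exists M, forall x, B x -> (x < M)%nat) \/ (forall x, Aset kk ll x -> B x).
Proof.
  intros [B' [HB Hiff]]. destruct (G0_inv B' HB) as [[M H]|H].
  left. exists M. intros x Hx. apply H, Hiff, Hx.
  right. intros x Hx. apply Hiff, H, Hx.
Qed.

Lemma bounded_not_inf B M : (forall x, B x -> (x < M)%nat) -> ~ (forall l : list nat, exists e, B (srcG e) /\ ~ In e l).
Proof.
  intros HB H. destruct (H (seq 0 M)) as [e [He Hn]]. apply Hn. apply in_seq. apply HB in He. unfold srcG in He. lia.
Qed.

Lemma inf_em_sup B : infinite_emitter srcG (rngG kk ll) B -> forall x, Aset kk ll x -> B x.
Proof.
  intros [HG Hi]. destruct (inG0_inv B HG) as [[M H]|H]; auto.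
  exfalso. exact (bounded_not_inf B M H Hi).
Qed.

Lemma Aset_inG0 : inG0 (rngG kk ll) (Aset kk ll).
Proof. exists (rngG kk ll 0). split. constructor. simpl. tauto. Qed.

Lemma Aset_inf : infinite_emitter srcG (rngG kk ll) (Aset kk ll).
Proof.
  split. apply Aset_inG0. intro l. destruct (Aset_unb (S (list_max l))) as [v [Hv HA]].
  exists v. split. exact HA. intro Hin.
  assert (list_max l <= list_max l)%nat as H0 by lia. apply list_max_le in H0.
  rewrite Forall_forall in H0. apply H0 in Hin. lia.
Qed.

Lemma Aset_min : minimal_infinite_emitter srcG (rngG kk ll) (Aset kk ll).
Proof.
  split. apply Aset_inf. intros B HG Hs [v [Hv Hnv]] Hinf.
  apply Hnv. apply (inf_em_sup B Hinf v Hv).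
Qed.

Lemma min_em_eq A : minimal_infinite_emitter srcG (rngG kk ll) A -> A = Aset kk ll.
Proof.
  intros [Hinf Hmin]. pose proof (inf_em_sup A Hinf) as Hsup.
  apply functional_extensionality. intro x. apply propositional_extensionality. split; auto.
  intro Hx. apply NNPP. intro Hn. apply (Hmin (Aset kk ll) Aset_inG0 Hsup); eauto. apply Aset_inf.
Qed.
Lemma least_ex (P : nat -> Prop) : (exists n, P n) -> exists n, P n /\ forall j, (j < n)%nat -> ~ P j.
Proof.
  intros [n Hn]. revert Hn. induction n as [n IH] using lt_wf_ind. intro Hn.
  destruct (classic (exists j, (j < n)%nat /\ P j)) as [[j [Hj Pj]]|Hno].
  - exact (IH j Hj Pj).
  - exists n. split; auto. intros j Hj Pj. apply Hno. eauto.
Qed.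

Lemma nat_enum (Sset : nat -> Prop) : (forall N, exists m, (N <= m)%nat /\ Sset m) ->
  exists h : nat -> nat, (forall n, Sset (h n)) /\ (forall n, (h n < h (S n))%nat) /\
    (forall m, Sset m -> exists n, h n = m).
Proof.
  intro Hinf.
  assert (Hnx : forall a, exists b, Sset b /\ (a < b)%nat /\ forall c, Sset c -> (a < c)%nat -> (b <= c)%nat).
  { intro a. destruct (least_ex (fun b => Sset b /\ (a < b)%nat)) as [b [[Hb1 Hb2] Hb3]].
    destruct (Hinf (S a)) as [m [Hm1 Hm2]]. exists m. split; auto.
    exists b. repeat split; auto. intros c Hc1 Hc2. destruct (le_lt_dec b c); auto.
    exfalso. apply (Hb3 c); auto. }
  destruct (least_ex Sset) as [b0 [Hb0 Hb0m]].
  { destruct (Hinf 0%nat) as [m [_ Hm]]. eauto. }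
  destruct (choice _ Hnx) as [nx Hnxs].
  set (h := fix h n := match n with O => b0 | S n' => nx (h n') end).
  exists h. split; [|split].
  - intro n; destruct n; simpl. exact Hb0. apply Hnxs.
  - intro n. simpl. apply Hnxs.
  - assert (forall n m, Sset m -> (m <= h n)%nat -> exists i, h i = m).
    { induction n; intros m Hm Hle.
      - exists 0%nat. simpl in *. destruct (le_lt_dec b0 m). simpl. lia. exfalso. apply (Hb0m m); auto.
      - destruct (le_lt_dec m (h n)); auto.
        exists (S n). simpl in *. destruct (Hnxs (h n)) as [_ [_ H3]]. specialize (H3 m Hm l). lia. }
    intros m Hm. apply (H m m Hm).
    assert (forall n, (n <= h n)%nat).
    { induction n. lia. assert (h n < h (S n))%nat by (simpl; apply Hnxs). lia. }
    apply H0.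
Qed.

Lemma enum_from_code {T : Type} (P : T -> Prop) (code : T -> nat) :
  (forall x y, P x -> P y -> code x = code y -> x = y) ->
  (forall N, exists x, P x /\ (N <= code x)%nat) ->
  exists p : nat -> T, (forall i, P (p i)) /\ (forall q, P q -> exists! i, p i = q).
Proof.
  intros Hinj Hinf.
  destruct (nat_enum (fun m => exists x, P x /\ code x = m)) as [h [Hh1 [Hh2 Hh3]]].
  { intro N. destruct (Hinf N) as [x [Px Hx]]. eauto. }
  assert (Hmono : forall i j, (i < j)%nat -> (h i < h j)%nat).
  { intros i j Hij. induction Hij. apply Hh2. specialize (Hh2 m). lia. }
  assert (Hhinj : forall i j, h i = h j -> i = j).
  { intros i j E. destruct (lt_eq_lt_dec i j) as [[H|H]|H]; auto;
    apply Hmono in H; lia. }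
  destruct (choice (fun n x => P x /\ code x = h n) Hh1) as [p Hp].
  exists p. split. intro i. apply Hp.
  intros q Pq. destruct (Hh3 (code q) (ex_intro _ q (conj Pq eq_refl))) as [n Hn].
  exists n. split.
  - destruct (Hp n) as [P1 P2]. apply Hinj; auto. congruence.
  - intros n' E. subst q. apply Hhinj. destruct (Hp n') as [_ P2]. congruence.
Qed.

Lemma to_nat_inj a b : to_nat a = to_nat b -> a = b.
Proof. intro E. rewrite <- (cancel_of_to a), <- (cancel_of_to b), E. reflexivity. Qed.

Fixpoint code_list (l : list nat) : nat :=
  match l with nil => O | x :: l' => S (to_nat (x, code_list l')) end.

Lemma code_list_inj l l' : code_list l = code_list l' -> l = l'.
Proof.
  revert l'. induction l; destruct l'; simpl; try discriminate; auto.
  intro E. injection E as E. apply to_nat_inj in E. injection E as -> E. f_equal. auto.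
Qed.

Inductive tm := tS (n : nat) | tR (n : nat) | tU (a b : tm) | tI (a b : tm).

Fixpoint interp {E : Type} (r : E -> nat -> Prop) (f : nat -> E) (t : tm) : nat -> Prop :=
  match t with
  | tS n => fun w => w = n
  | tR n => r (f n)
  | tU a b => fun x => interp r f a x \/ interp r f b x
  | tI a b => fun x => interp r f a x /\ interp r f b x
  end.

Fixpoint code_tm (t : tm) : nat :=
  match t with
  | tS n => to_nat (0%nat, n)
  | tR n => to_nat (1%nat, n)
  | tU a b => to_nat (2%nat, to_nat (code_tm a, code_tm b))
  | tI a b => to_nat (3%nat, to_nat (code_tm a, code_tm b))
  end.

Lemma code_tm_inj t t' : code_tm t = code_tm t' -> t = t'.
Proof.
  revert t'. induction t; destruct t'; simpl; intro E; apply to_nat_inj in E;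
    injection E; intros; try discriminate; subst; auto;
    match goal with H : to_nat _ = to_nat _ |- _ => apply to_nat_inj in H; injection H; intros end;
    f_equal; auto.
Qed.

Lemma G0_tm (r : nat -> nat -> Prop) B : G0i r B -> exists t, forall x, B x <-> interp r (fun n => n) t x.
Proof.
  induction 1.
  - exists (tS v). simpl. tauto.
  - exists (tR e). simpl. tauto.
  - destruct IHG0i1 as [a Ha], IHG0i2 as [b Hb]. exists (tU a b). simpl. intro x. rewrite Ha, Hb. tauto.
  - destruct IHG0i1 as [a Ha], IHG0i2 as [b Hb]. exists (tI a b). simpl. intro x. rewrite Ha, Hb. tauto.
Qed.

Definition code_set (r : nat -> nat -> Prop) (B : nat -> Prop) : nat :=
  code_tm (epsilon (inhabits (tS 0)) (fun t => forall x, B x <-> interp r (fun n => n) t x)).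

Lemma code_set_inj r B B' : inG0 r B -> inG0 r B' -> code_set r B = code_set r B' -> B = B'.
Proof.
  intros [C [HC HCi]] [C' [HC' HCi']] E.
  unfold code_set in E. apply code_tm_inj in E.
  destruct (G0_tm r C HC) as [t Ht]. destruct (G0_tm r C' HC') as [t' Ht'].
  pose proof (epsilon_spec (inhabits (tS 0)) (fun t => forall x, B x <-> interp r (fun n => n) t x)) as S1.
  pose proof (epsilon_spec (inhabits (tS 0)) (fun t => forall x, B' x <-> interp r (fun n => n) t x)) as S2.
  rewrite E in S1.
  assert (H1 : forall x, B x <-> interp r (fun n => n) (epsilon (inhabits (tS 0)) (fun t => forall x, B' x <-> interp r (fun n => n) t x)) x).
  { apply S1. exists t. intro x. rewrite HCi. apply Ht. }
  assert (H2 : forall x, B' x <-> interp r (fun n => n) (epsilon (inhabits (tS 0)) (fun t => forall x, B' x <-> interp r (fun n => n) t x)) x).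
  { apply S2. exists t'. intro x. rewrite HCi'. apply Ht'. }
  apply functional_extensionality. intro x. apply propositional_extensionality. rewrite H1, H2. tauto.
Qed.

Definition code_up (r : nat -> nat -> Prop) (q : list nat * (nat -> Prop)) : nat :=
  to_nat (code_list (fst q), code_set r (snd q)).

Notation rG := (rngG kk ll).
Definition X0 : pt nat nat := Inf (fun i => S i).
Definition Y0 : pt nat nat := Fin nil (Aset kk ll).
Definition xk (k : nat) : pt nat nat := Inf (fun i => S (i + k)).

Lemma shift_X0 k : shiftn k X0 = xk k.
Proof.
  induction k. unfold X0, xk. simpl. f_equal. apply functional_extensionality. intro; f_equal; lia.
  unfold shiftn in *. simpl. rewrite IHk. unfold xk. simpl. f_equal.
  apply functional_extensionality. intro; f_equal; lia.
Qed.

Lemma shift_Y0 k : shiftn k Y0 = Y0.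
Proof. induction k. reflexivity. unfold shiftn in *. simpl. rewrite IHk. reflexivity. Qed.

Lemma sep_thr q : is_upath srcG rG q -> exists c, forall k, (c <= k)%nat -> Aset kk ll (S k) ->
  (is_init srcG q (xk k) <-> is_init srcG q Y0).
Proof.
  intros [HG _]. destruct q as [a B]. simpl in HG. destruct a as [|e a'].
  - destruct (inG0_inv B HG) as [[M HM]|HS].
    + exists M. intros k Hk HA. split; intro H; exfalso.
      * destruct H as [_ [[e [He HB]]|[B0 [E _]]]].
        -- simpl in He. injection He as <-. apply HM in HB. unfold srcG in HB. lia.
        -- discriminate.
      * destruct H as [_ [[e [He HB]]|[B0 [E Hs]]]].
        -- simpl in He. discriminate.
        -- injection E as E. subst B0. destruct (Aset_unb M) as [v [Hv HAv]].
           apply Hs, HM in HAv. lia.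
    + exists 0%nat. intros k _ HA. split; intros _; split.
      * intros j e0 H. destruct j; discriminate.
      * right. exists (Aset kk ll). split. reflexivity. intros v Hv; simpl; auto.
      * intros j e0 H. destruct j; discriminate.
      * left. exists (S k). split. reflexivity. apply HS. exact HA.
  - exists (S e). intros k Hk _. split; intro H; exfalso; destruct H as [H _];
      specialize (H 0%nat e eq_refl); simpl in H; [injection H; lia | discriminate].
Qed.

Lemma dist_eq (p : nat -> list nat * (nat -> Prop)) x y i : x <> y -> separates srcG p x y i ->
  (forall j, (j < i)%nat -> ~ separates srcG p x y j) -> Defs.dist srcG p x y = (/2) ^ (S i).
Proof.
  intros Hne Hs Hl. unfold Defs.dist.
  match goal with |- epsilon ?I ?P = _ => pose proof (epsilon_spec I P) as HE; set (d := epsilon I P) in * end.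
  destruct HE as [[E _]|[_ [j [Hsj [Hlj Ed]]]]].
  - exists ((/2) ^ (S i)). right. split; auto. exists i. auto.
  - contradiction.
  - rewrite Ed. destruct (lt_eq_lt_dec i j) as [[H|H]|H].
    + exfalso. exact (Hlj i H Hs).
    + subst. reflexivity.
    + exfalso. exact (Hl j H Hsj).
Qed.

Lemma upath_succ k : is_upath srcG rG (S k :: nil, fun w => w = S (S k)).
Proof.
  split; [|split].
  - exists (fun w => w = S (S k)). split. constructor. tauto.
  - intros i e f H1 H2. destruct i; discriminate.
  - intros e H. simpl in H. injection H as <-. simpl. intros v Hv; exact Hv.
Qed.

Lemma dist_least p : enumeration srcG rG p -> forall k,
  exists i, Defs.dist srcG p (xk k) Y0 = (/2) ^ (S i) /\ separates srcG p (xk k) Y0 i /\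
    forall j, (j < i)%nat -> ~ separates srcG p (xk k) Y0 j.
Proof.
  intros [Hup Hsur] k.
  destruct (Hsur _ (upath_succ k)) as [i0 [Hi0 _]].
  destruct (least_ex (separates srcG p (xk k) Y0)) as [i [Hi Hil]].
  - exists i0. left. rewrite Hi0. split.
    + split. intros j e H. destruct j; [|destruct j; discriminate]. simpl in H. injection H as <-. reflexivity.
      left. exists (S (S k)). split; reflexivity.
    + intros [H _]. specialize (H 0%nat (S k) eq_refl). discriminate.
  - exists i. split; auto. apply dist_eq; auto. discriminate.
Qed.

Lemma half_pow_le a b : (a <= b)%nat -> (/2) ^ b <= (/2) ^ a.
Proof.
  induction 1. lra. simpl. pose proof (pow_lt (/2) m). lra.
Qed.

Lemma thr_all p : enumeration srcG rG p -> forall N, exists K, forall i k, (i <= N)%nat -> (K <= k)%nat ->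
  Aset kk ll (S k) -> ~ separates srcG p (xk k) Y0 i.
Proof.
  intros [Hup _]. induction N.
  - destruct (sep_thr (p 0%nat) (Hup 0%nat)) as [c Hc]. exists c. intros i k Hi Hk HA.
    assert (i = 0%nat) by lia. subst. specialize (Hc k Hk HA). unfold separates. tauto.
  - destruct IHN as [K HK]. destruct (sep_thr (p (S N)) (Hup (S N))) as [c Hc].
    exists (K + c)%nat. intros i k Hi Hk HA. destruct (le_lt_dec i N).
    + apply HK; auto; lia.
    + assert (i = S N) by lia. subst. assert (c <= k)%nat by lia. specialize (Hc k H HA). unfold separates. tauto.
Qed.

Lemma delta_lemma p : enumeration srcG rG p -> forall delta, 0 < delta ->
  exists K, forall k, (K <= k)%nat -> Aset kk ll (S k) -> Defs.dist srcG p (xk k) Y0 < delta.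
Proof.
  intros Hp delta Hd.
  destruct (pow_lt_1_zero (/2)) with (y := delta) as [N HN]; auto.
  { rewrite Rabs_pos_eq; lra. }
  destruct (thr_all p Hp N) as [K HK]. exists K. intros k Hk HA.
  destruct (dist_least p Hp k) as [i [Hd' [Hs _]]]. rewrite Hd'.
  destruct (le_lt_dec i N). { exfalso. exact (HK i k l Hk HA Hs). }
  specialize (HN N (le_n N)). rewrite Rabs_pos_eq in HN by (apply pow_le; lra).
  pose proof (half_pow_le N (S i) ltac:(lia)). lra.
Qed.

Lemma far_lemma p i0 : enumeration srcG rG p -> p i0 = (nil, Aset kk ll) -> forall k,
  ~ Aset kk ll (S k) -> (/2) ^ (S i0) <= Defs.dist srcG p (xk k) Y0.
Proof.
  intros Hp Hi0 k HA. destruct (dist_least p Hp k) as [i [Hd [_ Hl]]]. rewrite Hd.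
  assert (Hs : separates srcG p (xk k) Y0 i0).
  { right. rewrite Hi0. split.
    - intros [_ [[e [He HB]]|[B0 [E _]]]]. simpl in He. injection He as <-. exact (HA HB). discriminate.
    - split. intros j e H. destruct j; discriminate. right. exists (Aset kk ll). split; auto. intros v Hv; exact Hv. }
  destruct (le_lt_dec i i0). apply half_pow_le; lia. exfalso. exact (Hl i0 l Hs).
Qed.

Lemma ind_1 (P : Prop) : P -> Defs.ind P = 1.
Proof. intro H. unfold Defs.ind. destruct (excluded_middle_informative P); tauto. Qed.
Lemma ind_0 (P : Prop) : ~ P -> Defs.ind P = 0.
Proof. intro H. unfold Defs.ind. destruct (excluded_middle_informative P); tauto. Qed.
Lemma ind_bd (P : Prop) : 0 <= Defs.ind P <= 1.
Proof. unfold Defs.ind. destruct (excluded_middle_informative P); lra. Qed.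

Lemma sum_ub f m : (forall k, 0 <= f k <= 1) -> sum_f_R0 f m <= INR (S m).
Proof.
  intro Hb. induction m. simpl. specialize (Hb 0%nat). lra.
  change (sum_f_R0 f (S m)) with (sum_f_R0 f m + f (S m)). rewrite (S_INR (S m)).
  specialize (Hb (S m)). lra.
Qed.

Lemma sum_nonneg f m : (forall k, 0 <= f k <= 1) -> 0 <= sum_f_R0 f m.
Proof.
  intro Hb. induction m. simpl. apply Hb.
  change (sum_f_R0 f (S m)) with (sum_f_R0 f m + f (S m)). specialize (Hb (S m)). lra.
Qed.

Lemma sum_lb f L m : (forall k, 0 <= f k <= 1) -> (forall k, (L <= k <= m)%nat -> f k = 1) ->
  INR (S m - L) <= sum_f_R0 f m.
Proof.
  intro Hb. induction m; intro Hf.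
  - simpl. destruct L. simpl. rewrite Hf by lia. lra. simpl. apply Hb.
  - change (sum_f_R0 f (S m)) with (sum_f_R0 f m + f (S m)).
    destruct (le_lt_dec L (S m)).
    + rewrite (Hf (S m)) by lia. replace (S (S m) - L)%nat with (S (S m - L)) by lia.
      rewrite S_INR. assert (INR (S m - L) <= sum_f_R0 f m). apply IHm. intros; apply Hf; lia. lra.
    + replace (S (S m) - L)%nat with 0%nat by lia. simpl.
      pose proof (sum_nonneg f m Hb). specialize (Hb (S m)). lra.
Qed.

Lemma sum_ub2 f U m : (forall k, 0 <= f k <= 1) -> (forall k, (U <= k <= m)%nat -> f k = 0) ->
  sum_f_R0 f m <= INR U.
Proof.
  intro Hb. induction m; intro Hf.
  - simpl. destruct U. rewrite Hf by lia. simpl; lra. rewrite S_INR. pose proof (pos_INR U). specialize (Hb 0%nat). lra.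
  - change (sum_f_R0 f (S m)) with (sum_f_R0 f m + f (S m)).
    destruct (le_lt_dec U (S m)).
    + rewrite (Hf (S m)) by lia. assert (sum_f_R0 f m <= INR U). apply IHm. intros; apply Hf; lia. lra.
    + pose proof (sum_ub f (S m) Hb). change (sum_f_R0 f (S m)) with (sum_f_R0 f m + f (S m)) in H.
      assert (INR (S (S m)) <= INR U) by (apply le_INR; lia). lra.
Qed.

Lemma inX_fin a A : in_X srcG rG (Fin a A) -> A = Aset kk ll /\ (a = nil \/ a = 0%nat :: nil).
Proof.
  intros [Hpath [Hmin Hend]]. apply min_em_eq in Hmin. subst A. split; auto.
  destruct a as [|e a']. auto. right.
  assert (Hne : e :: a' <> nil) by discriminate.
  destruct (exists_last Hne) as [b [z Hz]]. rewrite Hz in *.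
  assert (Hz0 : z = 0%nat).
  { specialize (Hend z). rewrite length_app in Hend. simpl in Hend.
    replace (pred (length b + 1)) with (length b) in Hend by lia.
    rewrite nth_error_app2 in Hend by lia. rewrite Nat.sub_diag in Hend.
    specialize (Hend eq_refl). destruct z as [|m]; auto. exfalso.
    destruct (Aset_unb (S (S (S m)))) as [v [Hv HAv]]. apply Hend in HAv. simpl in HAv. lia. }
  subst z. destruct b as [|b0 b'].
  - reflexivity.
  - exfalso. assert (Hne2 : b0 :: b' <> nil) by discriminate.
    destruct (exists_last Hne2) as [c [y Hy]]. rewrite Hy in *.
    rewrite <- app_assoc in Hpath. simpl in Hpath.
    specialize (Hpath (length c) y 0%nat).
    rewrite nth_error_app2 in Hpath by lia. rewrite nth_error_app2 in Hpath by lia.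
    rewrite Nat.sub_diag in Hpath. replace (S (length c) - length c)%nat with 1%nat in Hpath by lia.
    exact (rng_0 y (Hpath eq_refl eq_refl)).
Qed.

Lemma inX_inf g : in_X srcG rG (Inf g) -> forall i, g (S i) = (g 1%nat + i)%nat.
Proof.
  intro H. simpl in H. induction i. lia.
  pose proof (H (S i)) as H1. pose proof (H i) as H0.
  destruct (g (S i)) as [|m] eqn:E. { exfalso. exact (rng_0 _ H0). }
  simpl in H1. unfold srcG in H1. rewrite H1. lia.
Qed.

Lemma X_countable : countable_set (in_X srcG rG).
Proof.
  exists (fun n => match n with
    | O => Fin nil (Aset kk ll)
    | S O => Fin (0%nat :: nil) (Aset kk ll)
    | S (S m) => let (a, b) := of_nat m in Inf (fun i => match i with O => a | S j => (b + j)%nat end)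
    end).
  intros x Hx. destruct x as [g|a A].
  - exists (S (S (to_nat (g 0%nat, g 1%nat)))). rewrite cancel_of_to. f_equal.
    apply functional_extensionality. intro i. destruct i. reflexivity. rewrite (inX_inf g Hx i). reflexivity.
  - destruct (inX_fin a A Hx) as [-> [-> | ->]]. exists 0%nat; reflexivity. exists 1%nat; reflexivity.
Qed.

Lemma enum_exists : exists p, enumeration srcG rG p.
Proof.
  destruct (enum_from_code (is_upath srcG rG) (code_up rG)) as [p [H1 H2]].
  - intros [a B] [a' B'] [G1 _] [G2 _] E. unfold code_up in E. simpl in *.
    apply to_nat_inj in E. injection E as E1 E2.
    apply code_list_inj in E1. apply code_set_inj in E2; auto. subst. reflexivity.
  - intro N. exists (S N :: nil, fun w => w = S (S N)). split. apply upath_succ.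
    unfold code_up. simpl fst. pose proof (to_nat_non_decreasing (code_list (S N :: nil)) (code_set rG (fun w => w = S (S N)))).
    assert (code_list (S N :: nil) = S (to_nat (S N, 0%nat))) by reflexivity.
    pose proof (to_nat_non_decreasing (S N) 0). cbn [snd]. lia.
  - exists p. split; auto.
Qed.

Definition gf p delta k := Defs.ind (Defs.dist srcG p (xk k) Y0 < delta).

Lemma Phi_eq p n delta : Phi srcG p n delta (Inf (fun i => S i)) (Fin nil (Aset kk ll)) =
  sum_f_R0 (gf p delta) n / INR n.
Proof.
  unfold Phi. f_equal. apply sum_eq. intros i _. unfold gf.
  change (Inf (fun i => S i)) with X0. change (Fin nil (Aset kk ll)) with Y0.
  rewrite shift_X0, shift_Y0. reflexivity.
Qed.

Lemma gf_bd p delta : forall k, 0 <= gf p delta k <= 1.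
Proof. intro k. apply ind_bd. Qed.

Lemma Tn_SS m : Tn (S m) = (S m * (Tn m + 1))%nat.
Proof. reflexivity. Qed.

Lemma limsup_part p : enumeration srcG rG p -> forall delta, 0 < delta ->
  limsup_eq (fun n => Phi srcG p (S n) delta (Inf (fun i => S i)) (Fin nil (Aset kk ll))) 1.
Proof.
  intros Hp delta Hd eps He. split.
  - destruct (INR_archimed eps 1 He) as [N HN]. exists N. intros n Hn.
    rewrite Phi_eq. pose proof (sum_ub (gf p delta) (S n) (gf_bd p delta)).
    set (D := INR (S n)) in *. rewrite (S_INR (S n)) in H. fold D in H.
    assert (HD : INR N <= D) by (apply le_INR; lia).
    assert (Dpos : 0 < D) by (apply lt_0_INR; lia).
    apply Rmult_lt_reg_r with D; [lra|]. unfold Rdiv. rewrite Rmult_assoc, Rinv_l, Rmult_1_r by lra.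
    nra.
  - intro N. destruct (delta_lemma p Hp delta Hd) as [K HK].
    destruct (INR_archimed eps (INR K + 1) He) as [J HJ].
    set (j := (J + N + 1)%nat). set (T := Tn (2*j)).
    set (m := (Tn (S (2*j)) - 1)%nat).
    assert (Hm1 : Tn (S (2*j)) = (S (2*j) * (T + 1))%nat) by reflexivity.
    assert (Hm2 : (2*j * (T+1) <= m)%nat) by (unfold m; rewrite Hm1; nia).
    assert (Hm3 : (2 <= m)%nat) by (unfold m; rewrite Hm1; nia).
    exists (m - 1)%nat. split. unfold m; rewrite Hm1; nia.
    replace (S (m - 1)) with m by lia. rewrite Phi_eq.
    pose proof (sum_lb (gf p delta) (Nat.max K T) m (gf_bd p delta)) as Hlb.
    assert (Hsum : INR (S m - Nat.max K T) <= sum_f_R0 (gf p delta) m).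
    { apply Hlb. intros k Hk. unfold gf. apply ind_1. apply HK. lia.
      apply Aset_iff. exists j. fold T. unfold m in Hk. lia. }
    assert (Hn1 : INR (S m) <= INR (S m - Nat.max K T) + INR K + INR T).
    { rewrite <- !plus_INR. apply le_INR. lia. }
    assert (Hm4 : INR (2*j) * (INR T + 1) <= INR m).
    { replace (INR T + 1) with (INR (T + 1)) by (rewrite plus_INR; simpl; lra).
      rewrite <- mult_INR. apply le_INR. exact Hm2. }
    assert (HJ2 : INR J <= INR (2*j)) by (apply le_INR; unfold j; lia).
    rewrite S_INR in Hn1.
    assert (Mpos : 0 < INR m) by (apply lt_0_INR; lia).
    pose proof (pos_INR T). pose proof (pos_INR K).
    assert (A1 : eps * (INR (2*j) * (INR T + 1)) <= eps * INR m) by (apply Rmult_le_compat_l; lra).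
    assert (A2 : (INR K + 1) * (INR T + 1) < eps * INR (2*j) * (INR T + 1)).
    { apply Rmult_lt_compat_r. lra. nra. }
    assert (A3 : INR K + INR T + 1 <= (INR K + 1) * (INR T + 1)) by nra.
    apply Rmult_lt_reg_r with (INR m); [lra|]. unfold Rdiv. rewrite Rmult_assoc, Rinv_l, Rmult_1_r by lra.
    nra.
Qed.

Lemma liminf_part p i0 : enumeration srcG rG p -> p i0 = (nil, Aset kk ll) ->
  liminf_eq (fun n => Phi srcG p (S n) ((/2) ^ (S i0)) (Inf (fun i => S i)) (Fin nil (Aset kk ll))) 0.
Proof.
  intros Hp Hi0 eps He. set (d0 := (/2) ^ (S i0)). split.
  - exists 0%nat. intros n _. rewrite Phi_eq. pose proof (sum_nonneg (gf p d0) (S n) (gf_bd p d0)).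
    assert (0 < INR (S n)) by (apply lt_0_INR; lia).
    assert (0 <= sum_f_R0 (gf p d0) (S n) / INR (S n)).
    { unfold Rdiv. apply Rmult_le_pos. lra. left. apply Rinv_0_lt_compat. lra. }
    lra.
  - intro N. destruct (INR_archimed eps 1 He) as [J HJ].
    set (j := (J + N + 1)%nat). set (U := Tn (S (2*j))).
    set (m := (Tn (S (S (2*j))) - 1)%nat).
    assert (Hm1 : Tn (S (S (2*j))) = (S (S (2*j)) * (U + 1))%nat) by reflexivity.
    assert (Hm2 : (J * (U+1) <= m)%nat) by (unfold m; rewrite Hm1; unfold j; nia).
    assert (Hm3 : (2 <= m)%nat) by (unfold m; rewrite Hm1; nia).
    exists (m - 1)%nat. split. unfold m; rewrite Hm1; nia.
    replace (S (m - 1)) with m by lia. rewrite Phi_eq.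
    assert (Hsum : sum_f_R0 (gf p d0) m <= INR U).
    { apply sum_ub2. apply gf_bd. intros k Hk. unfold gf. apply ind_0.
      assert (HnA : ~ Aset kk ll (S k)). { apply (Aset_gap j). fold U. unfold m in Hk. lia. }
      pose proof (far_lemma p i0 Hp Hi0 k HnA). fold d0 in H. lra. }
    assert (Hm4 : INR J * (INR U + 1) <= INR m).
    { replace (INR U + 1) with (INR (U + 1)) by (rewrite plus_INR; simpl; lra).
      rewrite <- mult_INR. apply le_INR. exact Hm2. }
    assert (Mpos : 0 < INR m) by (apply lt_0_INR; lia).
    pose proof (pos_INR U).
    assert (A1 : eps * (INR J * (INR U + 1)) <= eps * INR m) by (apply Rmult_le_compat_l; lra).
    assert (A2 : 1 * (INR U + 1) < eps * INR J * (INR U + 1)).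
    { apply Rmult_lt_compat_r. lra. nra. }
    apply Rmult_lt_reg_r with (INR m); [lra|]. unfold Rdiv. rewrite Rmult_assoc, Rinv_l, Rmult_1_r by lra.
    nra.
Qed.

Theorem mainTheorem10 :
  exists k l : nat -> nat,
    (forall n, (1 <= n)%nat -> (0 < k n)%nat /\ (0 < l n)%nat) /\
    no_sinks srcG /\ ranges_nonempty (rngG k l) /\
    exists p : nat -> list nat * (nat -> Prop),
      enumeration srcG (rngG k l) p /\
      countable_set (in_X srcG (rngG k l)) /\
      in_X srcG (rngG k l) (Inf (fun i => S i)) /\
      in_X srcG (rngG k l) (Fin nil (Aset k l)) /\
      DC1_pair srcG p (Inf (fun i => S i)) (Fin nil (Aset k l)) /\
      ~ (exists S : pt nat nat -> Prop,
           subset S (in_X srcG (rngG k l)) /\ ~ countable_set S /\ DC1_set srcG p S) /\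
      ~ Li_Yorke_chaotic srcG (rngG k l) p.
Proof.
  exists kk, ll. split; [|split; [|split]].
  - intros n Hn. destruct n as [|m]. lia. unfold kk, ll.
    pose proof (Tn_S (2*m)). pose proof (Tn_S (S (2*m))). lia.
  - intro v. exists v. reflexivity.
  - intro e. destruct e as [|m].
    + exists 1%nat. simpl. apply Aset_iff. exists 0%nat. simpl. lia.
    + exists (S (S m)). reflexivity.
  - destruct enum_exists as [p Hp]. exists p.
    destruct Hp as [Hup Hsur].
    assert (Hp : enumeration srcG rG p) by (split; auto).
    assert (Hupa : is_upath srcG rG (nil, Aset kk ll)).
    { split; [|split]. apply Aset_inG0. intros i e f H; destruct i; discriminate.
      intros e H. discriminate. }
    destruct (Hsur _ Hupa) as [i0 [Hi0 _]].
    split; [exact Hp|]. split; [exact X_countable|]. split; [|split; [|split; [|split]]].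
    + intro k. reflexivity.
    + split; [|split]. intros i e f H; destruct i; discriminate. apply Aset_min. intros e H; discriminate.
    + split. apply (limsup_part p Hp).
      exists ((/2) ^ (S i0)). split. apply pow_lt; lra. apply (liminf_part p i0 Hp Hi0).
    + intros [S [Hsub [Hnc _]]]. apply Hnc. destruct X_countable as [f Hf].
      exists f. intros x Hx. apply Hf, Hsub, Hx.
    + intros [S [Hsub [Hnc _]]]. apply Hnc. destruct X_countable as [f Hf].
      exists f. intros x Hx. apply Hf, Hsub, Hx.
Qed.
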